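(* There exists a function assigning to each real $x \geq 1$ a positive integer $m = m(x)$ such that: (i) $\varphi(m) \leq x$; (ii) $m = 2^t Q$, where $t \geq 0$ is an integer and $Q$ is an odd squarefree positive integer; and (iii) \[ m(x) \geq \left(\tfrac{1}{2} e^{\gamma} + o(1)\right) x \log\log x \quad \text{as } x \to +\infty, \] i.e., $\liminf_{x\to+\infty} m(x)/(x\log\log x) \geq \tfrac12 e^{\gamma}$.
   Context: $\varphi$ denotes Euler's totient function and $\gamma$ is the Euler--Mascheroni constant. $\log$ is the natural logarithm. *)

(* Defs.v *)
From Stdlib Require Import Reals.
From mathcomp Require Import ssreflect ssrbool eqtype ssrnat div prime.

Definition phi (n : nat) : nat := totient n.

Definition squarefree (q : nat) : Prop :=
  forall d : nat, (1 < d)%N -> ~ (d * d %| q)%N.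

(* g is the Euler--Mascheroni constant: g = lim_{n->oo} (H_n - ln n).
   Here sum_f_R0 (fun k => / INR (k+1)) n = H_{n+1}. *)
Definition is_euler_gamma (g : R) : Prop :=
  Un_cv (fun n : nat =>
           (sum_f_R0 (fun k : nat => / INR (k + 1)) n - ln (INR (n + 1)))%R) g.

(* Main.v *)
Require Import Defs.
From Stdlib Require Import Reals Lra Lia ZArith List ClassicalEpsilon.

Open Scope R_scope.

Lemma ln_le_sub1 v : 0 < v -> ln v <= v - 1.
Proof. intros Hv. pose proof (exp_ineq1_le (ln v)). rewrite exp_ln in H; lra. Qed.

Lemma ln_le' x y : 0 < x -> x <= y -> ln x <= ln y.
Proof.
intros Hx [H|H]; [left; apply ln_increasing; lra | subst; lra].
Qed.

Lemma ln_ge_frac (a b : Z) (k : nat) :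
  (0 < b)%Z -> (0 < a)%Z ->
  (1025 ^ Z.of_nat k * b <= a * 1024 ^ Z.of_nat k)%Z ->
  INR k / 1025 <= ln (IZR a / IZR b).
Proof.
intros Hb Ha Hk.
assert (H1 : / 1025 <= ln (1025/1024)).
{ assert (H := ln_le_sub1 (1024/1025) ltac:(lra)).
  replace (1025/1024) with (/ (1024/1025)) by field.
  rewrite ln_Rinv by lra. lra. }
assert (Hp : 0 < IZR (1024 ^ Z.of_nat k)).
{ apply IZR_lt. apply Z.pow_pos_nonneg; lia. }
assert (H2 : (1025/1024) ^ k <= IZR a / IZR b).
{ unfold Rdiv. rewrite Rpow_mult_distr, pow_inv, !pow_IZR.
  apply IZR_lt in Hb. apply IZR_lt in Ha. apply IZR_le in Hk.
  rewrite mult_IZR, mult_IZR in Hk.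
  apply (Rmult_le_reg_r (IZR b * IZR (1024 ^ Z.of_nat k))).
  { apply Rmult_lt_0_compat; lra. }
  field_simplify; [rewrite (Rmult_comm (IZR (1024 ^ _))); exact Hk | lra | lra]. }
assert (H3 := ln_le' ((1025/1024)^k) _ ltac:(apply pow_lt; lra) H2).
rewrite ln_pow in H3 by lra.
assert (0 <= INR k) by apply pos_INR.
unfold Rdiv at 1.
apply Rle_trans with (INR k * ln (1025/1024)); [apply Rmult_le_compat_l; lra | exact H3].
Qed.


Lemma gamma_lt g : is_euler_gamma g -> exp g < 190/101.
Proof.
intros Hg.
set (a := fun n : nat =>
  (sum_f_R0 (fun k : nat => / INR (k + 1)) n - ln (INR (n + 1)))%R).
assert (Hdec : Un_decreasing a).
{ intro n. unfold a. rewrite tech5.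
  assert (Hu : 0 < INR (n + 1)) by (apply lt_0_INR; lia).
  replace (INR (S n + 1)) with (INR (n + 1) + 1) by (rewrite <- S_INR; f_equal; lia).
  set (u := INR (n + 1)) in *.
  assert (H := ln_le_sub1 (u / (u + 1)) ltac:(apply Rdiv_lt_0_compat; lra)).
  unfold Rdiv in H. rewrite ln_mult, ln_Rinv in H by (try apply Rinv_0_lt_compat; lra).
  replace (u * / (u + 1) - 1) with (- / (u + 1)) in H by (field; lra).
  lra. }
assert (Hle := decreasing_ineq a g Hdec Hg 31).
unfold a in Hle.
assert (Hs : sum_f_R0 (fun k : nat => / INR (k + 1)) 31 <= 406/100).
{ cbv [sum_f_R0]. rewrite !INR_IZR_INZ.
  cbn [Nat.add Z.of_nat Pos.of_succ_nat Pos.succ]. lra. }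
assert (Hl2 : INR 710 / 1025 <= ln (IZR 2 / IZR 1)).
{ apply ln_ge_frac; [lia | lia | apply Zle_bool_imp_le; vm_compute; reflexivity]. }
assert (Hlc : INR 647 / 1025 <= ln (IZR 190 / IZR 101)).
{ apply ln_ge_frac; [lia | lia | apply Zle_bool_imp_le; vm_compute; reflexivity]. }
replace (IZR 2 / IZR 1) with 2 in Hl2 by (simpl; lra).
replace (INR (31 + 1)) with (2 ^ 5) in Hle by (simpl; lra).
rewrite ln_pow in Hle by lra.
rewrite INR_IZR_INZ in Hl2, Hlc, Hle. simpl Z.of_nat in Hl2, Hlc, Hle.
assert (Hg' : g < ln (190/101)) by lra.
apply ln_lt_inv; [apply exp_pos | lra | rewrite ln_exp; exact Hg'].
Qed.

Lemma ln_step (u : R) : 0 < u -> ln (u + 1) - ln u <= / u.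
Proof.
intros Hu. assert (H := ln_le_sub1 ((u + 1) / u) ltac:(apply Rdiv_lt_0_compat; lra)).
unfold Rdiv in H. rewrite ln_mult, ln_Rinv in H; try (try apply Rinv_0_lt_compat; lra).
replace ((u + 1) * / u - 1) with (/ u) in H by (field; lra). lra.
Qed.

Lemma ln_le_2sqrt u : 0 < u -> ln u <= 2 * sqrt u.
Proof.
intros Hu.
assert (Hs : 0 < sqrt u) by (apply sqrt_lt_R0; lra).
assert (E : ln u = 2 * ln (sqrt u)).
{ rewrite <- (sqrt_sqrt u) at 1 by lra. rewrite ln_mult by lra. ring. }
rewrite E. assert (H := ln_le_sub1 (sqrt u) Hs). lra.
Qed.

Lemma ln2_lt1 : ln 2 < 1.
Proof.
assert (H := exp_ineq1 1 ltac:(lra)).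
rewrite <- (ln_exp 1). apply ln_increasing; lra.
Qed.

Lemma asym (th : R) : 0 < th < 1 -> exists Y : nat, forall y : nat, (Y <= y)%nat ->
  forall x, 1 < x -> x < INR (S y) ^ (S (S y)) -> th * ln (ln x) <= ln (INR (S y)).
Proof.
intros [Ht0 Ht1].
set (d := / th - 1).
assert (Hd : 0 < d).
{ unfold d. assert (1 < / th). { rewrite <- Rinv_1. apply Rinv_lt_contravar; lra. } lra. }
set (U := (3 / d) ^ 2 + 1).
destruct (INR_unbounded (exp U)) as [Y HY].
exists Y. intros y Hy x Hx1 Hx2.
assert (HyY : INR Y <= INR (S y)) by (apply le_INR; lia).
assert (Hy0 : 0 < INR (S y)) by (apply lt_0_INR; lia).
set (u := ln (INR (S y))).
assert (HuU : U < u).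
{ unfold u. rewrite <- (ln_exp U). apply ln_increasing; [apply exp_pos | lra]. }
assert (HU1 : 1 <= U) by (unfold U; assert (0 <= (3/d)^2) by (apply pow2_ge_0); lra).
assert (Hu0 : 0 < u) by lra.
assert (Hlx : 0 < ln x) by (rewrite <- ln_1; apply ln_increasing; lra).
assert (H1 : ln x < INR (S (S y)) * u).
{ unfold u. rewrite <- ln_pow by lra. apply ln_increasing; lra. }
assert (H2 : INR (S (S y)) <= 2 * INR (S y)).
{ rewrite (S_INR (S y)). assert (1 <= INR (S y)) by (apply (le_INR 1); lia). lra. }
assert (H3 : ln x < 2 * INR (S y) * u) by nra.
assert (H4 : ln (ln x) < ln 2 + u + ln u).
{ replace (ln 2 + u + ln u) with (ln (2 * INR (S y) * u)).
  - apply ln_increasing; lra.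
  - rewrite !ln_mult by (try apply Rmult_lt_0_compat; lra). unfold u. ring. }
assert (H5 := ln_le_2sqrt u Hu0).
assert (Hs0 : 0 < sqrt u) by (apply sqrt_lt_R0; lra).
assert (Hsq : sqrt u * sqrt u = u) by (apply sqrt_sqrt; lra).
assert (Hs3 : 3 / d <= sqrt u).
{ apply Rsqr_incr_0_var; [| lra]. unfold Rsqr. rewrite Hsq.
  unfold U in HuU. simpl in HuU. lra. }
assert (Hs1 : 1 <= sqrt u).
{ destruct (Rle_or_lt 1 (sqrt u)) as [h|h]; [exact h|].
  assert (sqrt u * sqrt u < 1) by nra. lra. }
assert (H6 : 3 * sqrt u <= d * u).
{ assert (3 <= d * sqrt u).
  { apply (Rmult_le_compat_l d) in Hs3; [|lra]. unfold Rdiv in Hs3.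
    replace (d * (3 * / d)) with 3 in Hs3 by (field; lra). exact Hs3. }
  assert (Hm := Rmult_le_compat_r (sqrt u) 3 (d * sqrt u) (Rlt_le _ _ Hs0) H).
  rewrite Rmult_assoc, Hsq in Hm. exact Hm. }
assert (H7 : ln (ln x) < u * (/ th)).
{ assert (ln 2 < 1) by apply ln2_lt1.
  replace (u * / th) with (u + d * u) by (unfold d; ring). lra. }
apply Rmult_lt_compat_l with (r := th) in H7; [|lra].
replace (th * (u * / th)) with u in H7 by (field; lra). lra.
Qed.

Definition Nf (x : R) : nat := Z.to_nat (up x - 1).

Lemma Nf_spec x : 0 <= x -> INR (Nf x) <= x < INR (Nf x) + 1.
Proof.
intros Hx. destruct (archimed x) as [H1 H2].
assert (Hup : (1 <= up x)%Z).
{ assert (0 < IZR (up x)) by lra.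
  apply lt_IZR in H. lia. }
unfold Nf. rewrite INR_IZR_INZ, Z2Nat.id by lia.
rewrite minus_IZR. simpl. lra.
Qed.

Definition Lq : list nat := (257 :: 977 :: 929 :: 883 :: 839 :: 401 :: 761 :: 727 :: 691 :: 659 :: 631 :: 601 :: 571 :: 1087 :: 1033 :: nil)%nat.

Ltac finq e q := exists e, q; split; [simpl; tauto | rewrite INR_IZR_INZ; cbn -[IZR]; lra].

Lemma net_base (z : R) : 1 <= z < 2 -> exists (j q : nat), In q Lq /\
  19/20 * z * INR (q - 1) <= 2 ^ j <= z * INR (q - 1).
Proof.
intros [H1 H2].
destruct (Rlt_le_dec z (64/61)) as [?|?]; [finq 8%nat 257%nat|].
destruct (Rlt_le_dec z (32/29)) as [?|?]; [finq 10%nat 977%nat|].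
destruct (Rlt_le_dec z (512/441)) as [?|?]; [finq 10%nat 929%nat|].
destruct (Rlt_le_dec z (512/419)) as [?|?]; [finq 10%nat 883%nat|].
destruct (Rlt_le_dec z (32/25)) as [?|?]; [finq 10%nat 839%nat|].
destruct (Rlt_le_dec z (128/95)) as [?|?]; [finq 9%nat 401%nat|].
destruct (Rlt_le_dec z (512/363)) as [?|?]; [finq 10%nat 761%nat|].
destruct (Rlt_le_dec z (512/345)) as [?|?]; [finq 10%nat 727%nat|].
destruct (Rlt_le_dec z (512/329)) as [?|?]; [finq 10%nat 691%nat|].
destruct (Rlt_le_dec z (512/315)) as [?|?]; [finq 10%nat 659%nat|].
destruct (Rlt_le_dec z (128/75)) as [?|?]; [finq 10%nat 631%nat|].
destruct (Rlt_le_dec z (512/285)) as [?|?]; [finq 10%nat 601%nat|].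
destruct (Rlt_le_dec z (1024/543)) as [?|?]; [finq 10%nat 571%nat|].
destruct (Rlt_le_dec z (256/129)) as [?|?]; [finq 11%nat 1087%nat|].
finq 11%nat 1033%nat.
Qed.

Lemma net (z : R) : 1 <= z -> exists (j q : nat), In q Lq /\
  19/20 * z * INR (q - 1) <= 2 ^ j <= z * INR (q - 1).
Proof.
intros Hz.
assert (Hn : forall n z, 1 <= z < 2 ^ n -> exists (j q : nat), In q Lq /\
  19/20 * z * INR (q - 1) <= 2 ^ j <= z * INR (q - 1)).
{ induction n as [|n IH]; intros w [Hw1 Hw2].
  - simpl in Hw2; lra.
  - destruct (Rlt_le_dec w 2) as [h|h]; [apply net_base; lra|].
    destruct (IH (w / 2)) as (j & q & Hq & Ha & Hb).
    { simpl in Hw2; split; lra. }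
    exists (S j), q; split; [exact Hq|]. simpl.
    assert (0 <= INR (q - 1)) by apply pos_INR.
    split; nra. }
destruct (INR_unbounded z) as [n Hn'].
apply (Hn n); split; [lra|].
apply Rlt_le_trans with (INR n); [lra|].
clear. induction n as [|n IH]; [simpl; lra|].
rewrite S_INR; simpl.
assert (1 <= 2 ^ n) by (apply pow_R1_Rle; lra). lra.
Qed.

Close Scope R_scope.

From mathcomp Require Import ssreflect ssrbool eqtype ssrnat div prime.
From mathcomp Require Import all_boot all_order.
From mathcomp Require Import zify.
Set Implicit Arguments. Unset Strict Implicit. Unset Printing Implicit Defensive.

Lemma prime_not_dvd_prod (p : nat) (s : seq nat) : prime p -> all prime s -> p \notin s ->
  ~~ (p %| \prod_(i <- s) i).
Proof.
move=> pp; elim: s => [|a s IH] /=; first by rewrite big_nil dvdn1; case: eqP => // p1; rewrite p1 in pp.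
case/andP=> pa ps; rewrite inE negb_or => /andP [pna pns].
rewrite big_cons Euclid_dvdM // (dvdn_prime2 pp pa) negb_or pna /=.
exact: IH.
Qed.

Lemma totient_prod (s : seq nat) : uniq s -> all prime s ->
  totient (\prod_(p <- s) p) = \prod_(p <- s) p.-1.
Proof.
elim: s => [|a s IH] /=; first by rewrite !big_nil.
case/andP=> nas us /andP [pa ps].
rewrite !big_cons totient_coprime; first by rewrite (totient_prime pa) IH.
by rewrite prime_coprime // prime_not_dvd_prod.
Qed.

Lemma odd_prod (s : seq nat) : all odd s -> odd (\prod_(p <- s) p).
Proof.
elim: s => [|a s IH] /=; first by rewrite big_nil.
by case/andP=> oa os; rewrite big_cons oddM oa IH.
Qed.

Lemma prod_gt0 (s : seq nat) : all (fun p => 0 < p) s -> 0 < \prod_(p <- s) p.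
Proof.
elim: s => [|a s IH] /=; first by rewrite big_nil.
by case/andP=> oa os; rewrite big_cons muln_gt0 oa IH.
Qed.

Lemma sqfree_prod (s : seq nat) : uniq s -> all prime s ->
  squarefree (\prod_(p <- s) p).
Proof.
move=> us ps d d1 dd.
have pr := pdiv_prime d1.
set r := pdiv d in pr.
have rd : r %| d := pdiv_dvd d.
have rr : r * r %| \prod_(p <- s) p := dvdn_trans (dvdn_mul rd rd) dd.
have rin : r \in s.
  apply: contraT => rns.
  have := prime_not_dvd_prod pr ps rns.
  by rewrite (dvdn_trans (dvdn_mulr r (dvdnn r)) rr).
move: rr; rewrite (bigD1_seq r rin us) /= dvdn_pmul2l ?prime_gt0 //.
rewrite -big_filter.
apply/negP; apply: prime_not_dvd_prod => //.
  by rewrite all_filter; apply/allP => x xs; apply/implyP => _; exact: (allP ps).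
by rewrite mem_filter eqxx.
Qed.

Definition Podd (p : nat) := prime p && odd p.
Definition Sq (y q : nat) := [seq p <- iota 0 y.+1 | Podd p && (p != q)].
Definition Aodd (y : nat) := \prod_(p <- iota 0 y.+1 | Podd p) p.-1.
Definition Qs (y q : nat) := \prod_(p <- Sq y q) p.
Definition mval (y q j : nat) := (2 ^ j.+1 * Qs y q)%N.

Lemma Sq_uniq y q : uniq (Sq y q).
Proof. by rewrite filter_uniq // iota_uniq. Qed.

Lemma Sq_prime y q : all prime (Sq y q).
Proof. by rewrite all_filter; apply/allP => x _; apply/implyP => /andP [/andP [] ]. Qed.

Lemma Sq_odd y q : all odd (Sq y q).
Proof. by rewrite all_filter; apply/allP => x _; apply/implyP => /andP [/andP [] ]. Qed.

Lemma Qs_gt0 y q : 0 < Qs y q.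
Proof. apply: prod_gt0; apply/allP => x xs; apply: prime_gt0; exact: (allP (Sq_prime y q)). Qed.

Lemma Qs_odd y q : odd (Qs y q).
Proof. exact: odd_prod (Sq_odd y q). Qed.

Lemma Qs_sqfree y q : squarefree (Qs y q).
Proof. exact: sqfree_prod (Sq_uniq y q) (Sq_prime y q). Qed.

Lemma phi_mval y q j : phi (mval y q j) = (2 ^ j * \prod_(p <- Sq y q) p.-1)%N.
Proof.
rewrite /phi /mval totient_coprime; last by rewrite coprimeXl // coprime2n Qs_odd.
by rewrite totient_pfactor // mul1n /Qs totient_prod ?Sq_uniq ?Sq_prime.
Qed.

Lemma mval_gt0 y q j : 0 < mval y q j.
Proof. by rewrite /mval muln_gt0 expn_gt0 Qs_gt0. Qed.

Lemma A_split y q : Podd q -> q <= y ->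
  Aodd y = (q.-1 * \prod_(p <- Sq y q) p.-1)%N.
Proof.
move=> pq qy.
rewrite /Aodd -big_filter (bigD1_seq q) //.
- by rewrite big_filter_cond /Sq big_filter.
- by rewrite mem_filter pq mem_iota.
- by rewrite filter_uniq // iota_uniq.
Qed.

Lemma A_gt0 y : 0 < Aodd y.
Proof.
apply: prodn_cond_gt0 => p /andP [pp op].
have := odd_prime_gt2 op pp; lia.
Qed.

Lemma prod_pred_le (y : nat) (P : pred nat) (s : seq nat) : 0 < y ->
  all (fun p => p <= y) s -> \prod_(p <- s | P p) p.-1 <= y ^ size s.
Proof.
move=> y0; elim: s => [|a s IH] /=; first by rewrite big_nil.
case/andP=> ay ays; rewrite big_cons expnS.
case: (P a).
  apply: leq_mul; [lia | exact: IH].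
apply: (leq_trans (IH ays)); exact: leq_pmull.
Qed.

Lemma A_le y : 0 < y -> Aodd y <= y ^ y.+1.
Proof.
move=> y0; rewrite /Aodd.
rewrite -[X in _ <= _ ^ X](size_iota 0 y.+1).
apply: prod_pred_le => //.
by apply/allP => x; rewrite mem_iota; lia.
Qed.

Lemma yN_ex N : exists k, k ^ k.+1 <= N.
Proof. by exists 0; rewrite exp0n. Qed.

Lemma yN_bd N : forall k, k ^ k.+1 <= N -> k <= N.
Proof.
move=> [|k] // h; apply: leq_trans h.
by rewrite -[X in X <= _]expn1 leq_pexp2l.
Qed.

Definition yN (N : nat) := ex_maxn (yN_ex N) (@yN_bd N).

Lemma yN_spec N : yN N ^ (yN N).+1 <= N /\ N < (yN N).+1 ^ (yN N).+2 /\
  forall Y, Y ^ Y.+1 <= N -> Y <= yN N.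
Proof.
rewrite /yN; case: ex_maxnP => y Hy Hmax.
split=> //; split=> //.
by rewrite ltnNge; apply/negP => /Hmax; rewrite ltnn.
Qed.

From mathcomp Require Import all_algebra.
From mathcomp Require Import Rstruct ring.
Import Order.TTheory GRing.Theory Num.Theory.
Open Scope ring_scope.

Lemma geom_id (R : comRingType) (r : R) n :
  (1 - r) * \sum_(j < n) r ^+ j = 1 - r ^+ n.
Proof.
elim: n => [|n IH]; first by rewrite big_ord0 mulr0 expr0 subrr.
rewrite big_ord_recr /= mulrDr IH exprS; ring.
Qed.

Lemma geom_bound (R : realFieldType) (p n : nat) : (1 < p)%N ->
  0 <= \sum_(j < n) ((p%:R ^+ j)^-1 : R) <= p%:R / (p%:R - 1).
Proof.
move=> p1.
have p0 : (0 : R) < p%:R by rewrite ltr0n; lia.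
have p1' : (1 : R) < p%:R by rewrite ltr1n.
apply/andP; split.
  by apply: sumr_ge0 => j _; rewrite invr_ge0 exprn_ge0 // ltW.
set r := (p%:R : R)^-1.
have r0 : 0 < r by rewrite invr_gt0.
have r1 : r < 1 by rewrite invf_lt1.
under eq_bigr => j _ do rewrite -exprVn.
have H := geom_id r n.
have -> : p%:R / (p%:R - 1) = (1 - r)^-1 :> R.
  have pn0 : (p%:R : R) != 0 by rewrite gt_eqF.
  have pn1 : (p%:R : R) - 1 != 0 by rewrite gt_eqF // subr_gt0.
  rewrite /r; field; rewrite ?pn0 ?pn1 //.
rewrite -/r -(ler_pM2l (_ : 0 < 1 - r)); last by rewrite subr_gt0.
rewrite H divff; last by rewrite gt_eqF // subr_gt0.
rewrite gerBl; apply: exprn_ge0; exact: ltW.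
Qed.

Lemma prod_logn (y k : nat) : (0 < k)%N -> (k <= y)%N ->
  (\prod_(i < y.+1) i ^ logn i k)%N = k.
Proof.
move=> k0 ky.
rewrite -[RHS](partnT k0) (widen_partn _ ky) big_mkord.
by apply: eq_bigl => i.
Qed.

Lemma core (R : realFieldType) (y : nat) :
  \sum_(k < y.+1 | (0 < k)%N) ((k%:R)^-1 : R)
   <= \prod_(p < y.+1 | prime p) (p%:R / (p%:R - 1)).
Proof.
pose F := fun (i j : 'I_y.+1) =>
  if prime i then ((i%:R : R) ^+ j)^-1 else (j == ord0)%:R.
have F0 : forall i j, 0 <= F i j.
  move=> i j; rewrite /F; case: ifP => _; last by rewrite ler0n.
  by rewrite invr_ge0 exprn_ge0 // ler0n.
have H1 : \prod_(i < y.+1) \sum_(j < y.+1) F i j <=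
          \prod_(p < y.+1 | prime p) (p%:R / (p%:R - 1)).
  rewrite [X in _ <= X]big_mkcond /=.
  apply: ler_prod => i _; rewrite /F; case: ifP => pi.
    apply: geom_bound; exact: prime_gt1.
  rewrite (bigD1 ord0) //= big1 ?addr0 ?lexx ?ler01 //.
  by move=> j /negPf ->.
rewrite bigA_distr_bigA /= in H1.
apply: le_trans H1.
pose emb := fun k : 'I_y.+1 =>
  [ffun i : 'I_y.+1 => (inord (logn i k) : 'I_y.+1)].
have embE : forall k : 'I_y.+1, (0 < k)%N ->
  \prod_(i < y.+1) F i (emb k i) = (k%:R)^-1.
  move=> k k0.
  have lk : forall i : 'I_y.+1, (logn i k < y.+1)%N.
    move=> i; apply: (leq_trans (ltn_logl _ k0)); exact: ltnW (ltn_ord _).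
  transitivity (\prod_(i < y.+1) ((i%:R : R) ^+ logn i k)^-1).
    apply: eq_bigr => i _; rewrite /F ffunE.
    case: ifP => pi; first by rewrite inordK.
    have -> : logn i k = 0%N by rewrite lognE pi.
    by rewrite expr0 invr1 (_ : inord 0 = ord0) // ; apply: val_inj; rewrite /= inordK.
  rewrite prodfV; congr (_^-1).
  rewrite (eq_bigr (fun i : 'I_y.+1 => ((i ^ logn i k)%N)%:R)); last by move=> i _; rewrite natrX.
  by rewrite -natr_prod prod_logn // -ltnS.
have inj : {in [pred k : 'I_y.+1 | (0 < k)%N] &, injective emb}.
  move=> a b; rewrite !inE => a0 b0 eab; apply: val_inj.
  apply: eqn_from_log => // p.
  case: (ltnP p y.+1) => py.
    have := congr1 (fun f : {ffun 'I_y.+1 -> 'I_y.+1} => nat_of_ord (f (Ordinal py))) eab.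
    rewrite /emb !ffunE /= !inordK //.
      apply: (leq_trans (ltn_logl _ b0)); exact: ltnW (ltn_ord _).
    apply: (leq_trans (ltn_logl _ a0)); exact: ltnW (ltn_ord _).
  rewrite !ltn_log0 //.
    by apply: leq_trans py; apply: ltn_ord.
  by apply: leq_trans py; apply: ltn_ord.
rewrite (eq_bigr (fun k => \prod_(i < y.+1) F i (emb k i))); last first.
  by move=> k k0; rewrite embE.
pose G := fun f : {ffun 'I_y.+1 -> 'I_y.+1} => \prod_(i < y.+1) F i (f i).
have -> : \sum_(k < y.+1 | (0 < k)%N) \prod_(i < y.+1) F i (emb k i) =
   \sum_(k in [pred k : 'I_y.+1 | (0 < k)%N]) G (emb k) by apply: eq_bigl.
rewrite -(big_imset _ inj) /=.
rewrite [X in _ <= X](bigID (fun f => f \in [set emb x | x in [pred k : 'I_y.+1 | (0 < k)%N]])) /=.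
rewrite lerDl; apply: sumr_ge0 => f _; apply: prodr_ge0 => i _; exact: F0.
Qed.


Lemma harm (y : nat) : ln (y.+1%:R) <= \sum_(i < y) ((i.+1)%:R)^-1 :> R.
Proof.
elim: y => [|y IH]; first by rewrite big_ord0 ln_1.
rewrite big_ord_recr /=.
have Hu : Rlt 0 (y.+1)%:R by apply/RltP; rewrite ltr0n.
have := ln_step _ Hu; move/RleP => H.
rewrite -natr1.
apply: le_trans (lerD IH (lexx _)).
rewrite -lerBlDl. exact: H.
Qed.

Lemma harm2 (y : nat) : ln (y.+1%:R) <= \sum_(k < y.+1 | (0 < k)%N) (k%:R)^-1 :> R.
Proof.
rewrite big_mkcond big_ord_recl /= add0r.
exact: harm.
Qed.

Lemma ratio_id (s : seq nat) : all prime s ->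
  (\prod_(p <- s) p)%:R = (\prod_(p <- s) p.-1)%:R * \prod_(p <- s) (p%:R / (p%:R - 1)) :> R.
Proof.
elim: s => [|a s IH] /=; first by rewrite !big_nil mul1r.
case/andP=> pa ps; rewrite !big_cons !natrM IH //.
have a1 : (1 < a)%N := prime_gt1 pa.
have -> : (a.-1)%:R = a%:R - 1 :> R by rewrite -[in RHS](prednK (ltnW a1)) -natr1 addrK.
have : a%:R - 1 != 0 :> R by rewrite subr_eq0 pnatr_eq1; lia.
move=> h; field. exact: h.
Qed.

Definition pratio (p : nat) := (p%:R : R) / (p%:R - 1).

Lemma L8 y : ln (y.+1%:R) <= \prod_(p <- iota 0 y.+1 | prime p) pratio p.
Proof.
apply: le_trans (harm2 y) _.
have := core R y. rewrite /pratio.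
have -> : \prod_(p <- iota 0 y.+1 | prime p) (p%:R / (p%:R - 1) : R) = \prod_(0 <= p < y.+1 | prime p) (p%:R / (p%:R - 1)) by [].
by rewrite big_mkord.
Qed.

Lemma Podd_eq p : prime p && (p != 2) = Podd p.
Proof.
rewrite /Podd; case pp: (prime p) => //=.
case: (even_prime pp) => [->|op] //.
rewrite op; apply/eqP => p2; by rewrite p2 in op.
Qed.

Lemma L7 y q : Podd q -> (q <= y)%N -> (2 <= y)%N ->
  2 * \prod_(p <- Sq y q) pratio p =
  \prod_(p <- iota 0 y.+1 | prime p) pratio p * ((q%:R - 1) / q%:R).
Proof.
move=> pq qy y2.
rewrite /Sq big_filter.
rewrite -[in RHS]big_filter [in RHS](bigD1_seq 2); last 2 first.
- by rewrite mem_filter mem_iota; apply/andP; split => //; lia.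
- by rewrite filter_uniq // iota_uniq.
rewrite [in RHS]big_filter_cond [in RHS](eq_bigl _ _ Podd_eq).
rewrite -[in RHS]big_filter [in RHS](bigD1_seq q); last 2 first.
- by rewrite mem_filter pq mem_iota; lia.
- by rewrite filter_uniq // iota_uniq.
rewrite [in RHS]big_filter_cond /=.
have q2 : (2 < q)%N by case/andP: pq => pp op; exact: odd_prime_gt2.
have hq : q%:R != 0 :> R by rewrite pnatr_eq0; lia.
have hq1 : q%:R - 1 != 0 :> R by rewrite subr_eq0 pnatr_eq1; lia.
rewrite /pratio.
have r2 : (2%:R : R) / (2%:R - 1) = 2.
  by rewrite -[2%:R]natr1 addrK divr1.
have rq : (q%:R / (q%:R - 1)) * ((q%:R - 1) / q%:R) = 1 :> R.
  by rewrite mulrA divfK // divff.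
rewrite r2.
set P := \prod_(i <- _ | _) _.
set a := q%:R / (q%:R - 1).
set b := (q%:R - 1) / q%:R.
have -> : 2 * (a * P) * b = 2 * P * (a * b) by ring.
by rewrite rq mulr1.
Qed.

Lemma m_real y q j : Podd q -> (q <= y)%N -> (2 <= y)%N ->
  (mval y q j)%:R = (phi (mval y q j))%:R *
    (\prod_(p <- iota 0 y.+1 | prime p) pratio p * ((q%:R - 1) / q%:R)) :> R.
Proof.
move=> pq qy y2.
rewrite -L7 // phi_mval /mval /Qs !natrM (ratio_id (Sq_prime y q)) expnS !natrM.
rewrite /pratio. ring.
Qed.

Lemma phi_A y q j : Podd q -> (q <= y)%N ->
  (phi (mval y q j) * q.-1 = 2 ^ j * Aodd y)%N.
Proof.
move=> pq qy; rewrite phi_mval (A_split pq qy).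
by rewrite mulnAC -mulnA.
Qed.

Lemma Lq_prop q : In q Lq -> Podd q /\ (101 <= q <= 1087)%N.
Proof.
rewrite /Lq /= => H.
repeat (case: H => [<-|H]; [split; [vm_compute; reflexivity | by []]|]); case: H.
Qed.

Close Scope ring_scope.
Unset Implicit Arguments.
Open Scope R_scope.
From Stdlib Require Import Ring Field Lra Lia.

Lemma INR_expn2 j : INR (2 ^ j)%N = 2 ^ j.
Proof. by rewrite INRE natrX RpowE. Qed.

Lemma construct (x : R) (y : nat) : 1 <= x -> (1087 <= y)%N -> INR (y ^ y.+1) <= x ->
  exists n, (0 < n)%N /\ INR (phi n) <= x /\
   (exists t Q, n = (2 ^ t * Q)%N /\ odd Q /\ (0 < Q)%N /\ squarefree Q) /\
   95/101 * x * ln (INR (S y)) <= INR n.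
Proof.
move=> Hx1 Hy Hyx.
have y0 : (0 < y)%N by lia.
have HA := A_le y0.
have HA0 := A_gt0 y.
set A := Aodd y in HA HA0.
have HAR : 0 < INR A by apply lt_0_INR; lia.
have HAx : INR A <= x.
  apply: Rle_trans Hyx; apply le_INR; lia.
set z := x / INR A.
have Hz : 1 <= z.
  rewrite /z; apply (Rmult_le_reg_r (INR A)) => //.
  field_simplify; lra.
have [j [q [Hq [H1 H2]]]] := net z Hz.
have [pq /andP [q101 q1087]] := Lq_prop Hq.
have qy : (q <= y)%N by lia.
have y2 : (2 <= y)%N by lia.
exists (mval y q j).
split; first exact: mval_gt0.
have E1 : INR (phi (mval y q j)) * INR (q - 1)%coq_nat = 2 ^ j * INR A.
  have -> : (q - 1)%coq_nat = q.-1 by lia.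
  by rewrite -mult_INR -INR_expn2 -mult_INR !multE phi_A.
have Hq1 : 100 <= INR (q - 1)%coq_nat.
  have -> : 100 = INR 100 by rewrite INR_IZR_INZ /=.
  apply le_INR; lia.
have HPx : INR (phi (mval y q j)) <= x.
  apply (Rmult_le_reg_r (INR (q - 1)%coq_nat)); first lra.
  rewrite E1. rewrite /z in H2.
  have : 2 ^ j * INR A <= x / INR A * INR (q - 1)%coq_nat * INR A by apply: Rmult_le_compat_r; lra.
  move=> h; apply: Rle_trans h _; apply: Req_le; field; lra.
have HPx' : 19/20 * x <= INR (phi (mval y q j)).
  apply (Rmult_le_reg_r (INR (q - 1)%coq_nat)); first lra.
  rewrite E1. rewrite /z in H1.
  have : 19 / 20 * (x / INR A) * INR (q - 1)%coq_nat * INR A <= 2 ^ j * INR A by apply: Rmult_le_compat_r; lra.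
  move=> h; apply: Rle_trans h; apply: Req_le; field; lra.
split; first exact: HPx.
split.
  exists j.+1, (Qs y q); split => //; split; first exact: Qs_odd.
  split; [exact: Qs_gt0 | exact: Qs_sqfree].
have Em := @m_real y q j pq qy y2.
rewrite -!INRE in Em.
have HPr := L8 y.
move: Em HPr; set Pr := (X in _ = _ * (X * _)) => Em /RleP HPr.
rewrite -INRE in HPr.
have Hq' : 100/101 <= (INR q - 1) / INR q.
  have : 101 <= INR q.
    have -> : 101 = INR 101 by rewrite INR_IZR_INZ /=.
    apply le_INR; lia.
  move=> h. apply (Rmult_le_reg_r (INR q)); first lra.
  field_simplify; lra.
have Hln : 0 <= ln (INR (S y)).
  rewrite -ln_1; apply: ln_le'; first lra.
  have -> : 1 = INR 1 by [].
  apply le_INR; lia.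
rewrite Em.
have Hfin : 95/101 * x * ln (INR (S y)) <= INR (phi (mval y q j)) * (Pr * ((INR q - 1) / INR q)).
  have h1 : 19/20 * x * (ln (INR (S y)) * (100/101)) <= INR (phi (mval y q j)) * (Pr * ((INR q - 1) / INR q)).
    apply Rmult_le_compat; try lra.
    apply Rmult_le_compat; [exact Hln | lra | exact HPr | exact Hq'].
  lra.
exact Hfin.
Qed.


Lemma INR_expn a b : INR (a ^ b)%N = INR a ^ b.
Proof. by rewrite !INRE natrX RpowE. Qed.

Definition Pm (x : R) (n : nat) : Prop :=
  1 <= x -> (0 < n)%N /\ INR (phi n) <= x /\
   (exists t Q, n = (2 ^ t * Q)%N /\ odd Q /\ (0 < Q)%N /\ squarefree Q) /\
   ((1087 <= yN (Nf x))%N -> 95/101 * x * ln (INR (S (yN (Nf x)))) <= INR n).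

Lemma Pm_ex x : exists n, Pm x n.
Proof.
case: (Rle_dec 1 x) => Hx; last first.
  by exists 1%N => h; exfalso; apply: Hx.
have Hx0 : 0 <= x by lra.
have [HN1 HN2] := Nf_spec x Hx0.
set N := Nf x in HN1 HN2 *.
have N1 : (1 <= N)%N.
  have : INR 0 < INR N by rewrite INR_0; lra.
  move/INR_lt; lia.
have [Hs1 [Hs2 Hs3]] := yN_spec N.
set y := yN N in Hs1 Hs2 Hs3 *.
case: (leqP 1087 y) => Hy.
  have Hyx : INR (y ^ y.+1) <= x.
    apply: Rle_trans HN1; apply le_INR; lia.
  have [n [H1 [H2 [H3 H4]]]] := construct x y Hx Hy Hyx.
  by exists n => _; do 3 (split => //) => _.
exists 1%N => _; split => //; split.
  by rewrite /phi (_ : totient 1 = 1%N) //= ; lra.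
split; last by rewrite -/N -/y => h; exfalso; lia.
exists 0%N, 1%N; split => //; split => //; split => //.
move=> d d1 h; have := dvdn_leq (ltn0Sn 0) h; nia.
Qed.

Delimit Scope R_scope with R.

Theorem lemma2 (gamma : R) (Hgamma : is_euler_gamma gamma) :
  exists m : R -> nat,
    (forall x : R, (1 <= x)%R ->
       (0 < m x)%N /\
       (INR (phi (m x)) <= x)%R /\
       (exists t Q : nat, m x = (2 ^ t * Q)%N /\ odd Q /\ (0 < Q)%N /\ squarefree Q)) /\
    (forall eps : R, (0 < eps)%R ->
       exists X : R, forall x : R, (X <= x)%R ->
         ((/ 2 * exp gamma - eps) * x * ln (ln x) <= INR (m x))%R).
Proof.
have Hgl := gamma_lt gamma Hgamma.
pose m := fun x => proj1_sig (constructive_indefinite_description _ (Pm_ex x)).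
have Hm : forall x, Pm x (m x) := fun x => proj2_sig (constructive_indefinite_description _ (Pm_ex x)).
exists m; split.
  move=> x Hx; have [h1 [h2 [h3 _]]] := Hm x Hx; by [].
move=> eps Heps.
set K := / 2 * exp gamma.
have HK0 : 0 < K by have := exp_pos gamma; rewrite /K; lra.
have HKc : K < 95/101 by rewrite /K; lra.
set th := K / (95/101).
have Hth : 0 < th < 1.
  rewrite /th; split; first by apply: Rdiv_lt_0_compat; lra.
  apply (Rmult_lt_reg_r (95/101)); first lra.
  field_simplify; lra.
have [Y HY] := asym th Hth.
set Y' := maxn Y 1087.
have He1 : 2 < exp 1 by have := exp_ineq1 1 ltac:(lra); lra.
exists (Rmax (exp 1) (INR (Y' ^ Y'.+1))).
move=> x Hx.
have Hxe : exp 1 <= x by apply: Rle_trans Hx; apply: Rmax_l.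
have HxY : INR (Y' ^ Y'.+1) <= x by apply: Rle_trans Hx; apply: Rmax_r.
have Hx1 : 1 <= x by lra.
have Hx0 : 0 <= x by lra.
have [HN1 HN2] := Nf_spec x Hx0.
set N := Nf x in HN1 HN2.
have HYN : (Y' ^ Y'.+1 <= N)%N.
  have : INR (Y' ^ Y'.+1) < INR N.+1 by rewrite S_INR; lra.
  move/INR_lt; lia.
have [Hs1 [Hs2 Hs3]] := yN_spec N.
set y := yN N in Hs1 Hs2 Hs3.
have HY'y := Hs3 _ HYN.
have [_ [_ [_ Hmx]]] := Hm x Hx1.
rewrite -/N -/y in Hmx.
have Hmx' := Hmx ltac:(lia).
have Hxy : x < INR (S y) ^ (S (S y)).
  rewrite -INR_expn.
  apply: (Rlt_le_trans _ _ _ HN2).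
  have -> : INR N + 1 = INR N.+1 by rewrite S_INR.
  apply le_INR; lia.
have Hth' := HY y ltac:(lia) x ltac:(lra) Hxy.
have Hlx : 1 <= ln x.
  rewrite -(ln_exp 1); apply: ln_le'; [exact: exp_pos | exact: Hxe].
have Hllx : 0 <= ln (ln x).
  rewrite -ln_1; apply: ln_le'; lra.
have E : K = 95/101 * th by rewrite /th; field.
apply: Rle_trans Hmx'.
have h1 : (K - eps) * x * ln (ln x) <= K * x * ln (ln x).
  apply: Rmult_le_compat_r => //; apply: Rmult_le_compat_r; lra.
apply: Rle_trans h1 _.
rewrite E.
have h2 : th * ln (ln x) * x <= ln (INR (S y)) * x by apply: Rmult_le_compat_r; lra.
have -> : 95 / 101 * th * x * ln (ln x) = 95/101 * (th * ln (ln x) * x) by ring.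
have -> : 95 / 101 * x * ln (INR (S y)) = 95/101 * (ln (INR (S y)) * x) by ring.
apply: Rmult_le_compat_l; lra.
Qed.
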